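(* Let $G$ be a finite transitive permutation group on a set $V$ with point stabilizers of order $3$, and suppose $G$ admits a maximal basic intersecting set $\mathcal{F}$ with $|\mathcal{F}|=4$. Then no point stabilizer $G_v$, $v\in V$, is contained in $\mathcal{F}$; that is, $\mathcal{F}=\{1,x,y,z\}$ with $x$, $y$ and $z$ belonging to different point stabilizers.
   Context: A subset $\mathcal{F}\subseteq G$ is intersecting if for all $g,h\in\mathcal{F}$ there is $v\in V$ with $g(v)=h(v)$; it is maximal if not properly contained in another intersecting set; it is basic if it contains the identity $1$. *)

(* Defs.v *)
From mathcomp Require Import all_boot all_fingroup.
Set Implicit Arguments. Unset Strict Implicit. Unset Printing Implicit Defensive.
Import GroupScope.

Definition intersecting (V : finType) (F : {set {perm V}}) : Prop :=
  forall g h, g \in F -> h \in F -> exists v : V, g v = h v.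

Definition maximal_intersecting (V : finType) (G : {group {perm V}})
    (F : {set {perm V}}) : Prop :=
  [/\ F \subset G, intersecting F &
      forall F' : {set {perm V}}, F' \subset G -> intersecting F' ->
        F \subset F' -> F' = F].

Definition basic (V : finType) (F : {set {perm V}}) : Prop := 1 \in F.

(* Main.v *)
Require Import Defs.
From mathcomp Require Import all_boot all_fingroup.
From mathcomp Require Import cyclic.
Import GroupScope.

Lemma stab_not_sub (V : finType) (G : {group {perm V}})
    (F : {set {perm V}}) :
  (forall v : V, #|'C_G[v | 'P]| = 3) ->
  maximal_intersecting G F -> #|F| = 4 ->
  forall v : V, ~ ('C_G[v | 'P] \subset F).
Proof.
move=> Hst [sFG iF maxF] HF4 v sub.
have Hc : #|F :\: 'C_G[v | 'P]| == 1%N.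
  by rewrite cardsD (setIidPr sub) HF4 Hst.
case/cards1P: Hc => z Hz.
have zFS : z \in F :\: 'C_G[v | 'P] by rewrite Hz set11.
move: (zFS); rewrite inE => /andP [zS zF].
have oneF : (1 : {perm V}) \in F by apply: (subsetP sub); apply: group1.
have [w zw] := iF _ _ oneF zF.
rewrite perm1 in zw.
have zG : z \in G by apply: (subsetP sFG).
have zwi : z^-1 w = w by rewrite {1}zw permK.
have key : forall f, f \in F -> exists u, z^-1 u = f u.
  move=> f fF.
  case fS: (f \in 'C_G[v | 'P]).
    have fiF : f^-1 \in F by apply: (subsetP sub); rewrite groupV.
    have [u Hu] := iF _ _ zF fiF.
    exists (z u); rewrite permK Hu permKV //.
  have : f \in F :\: 'C_G[v | 'P] by rewrite inE fS fF.
  rewrite Hz inE => /eqP ->.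
  by exists w; rewrite zwi.
have ziF : z^-1 \in F.
  have E : z^-1 |: F = F.
    apply: maxF.
    - by rewrite subUset sub1set groupV zG sFG.
    - move=> g h; rewrite !inE => /orP [/eqP -> | gF] /orP [/eqP -> | hF].
      + by exists w.
      + exact: key.
      + by have [u Hu] := key g gF; exists u.
      + exact: iF.
    - exact: subsetUr.
  by rewrite -E setU11.
have : z^-1 \in F :\: 'C_G[v | 'P].
  by rewrite inE ziF andbT; apply: contra zS => H; rewrite -(invgK z) groupV.
rewrite Hz inE => /eqP zzi.
have zC : z \in 'C_G[w | 'P] by rewrite inE zG; apply/astab1P; rewrite /= apermE -zw.
have := expg_cardG zC.
rewrite Hst !expgS expg0 mulg1.
rewrite -{3}zzi mulgV mulg1 => z1.
by move: zS; rewrite z1 group1.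
Qed.

Theorem corollary5p3 (V : finType) (G : {group {perm V}})
    (F : {set {perm V}}) :
  [transitive G, on [set: V] | 'P] ->
  (forall v : V, #|'C_G[v | 'P]| = 3) ->
  maximal_intersecting G F -> basic F -> #|F| = 4 ->
  (forall v : V, ~ ('C_G[v | 'P] \subset F)) /\
  (forall x y : {perm V}, x \in F -> y \in F -> x != 1 -> y != 1 -> x != y ->
     forall v : V, ~ (x \in 'C_G[v | 'P] /\ y \in 'C_G[v | 'P])).
Proof.
move=> _ Hst Hm Hb HF4.
have P1 := @stab_not_sub V G F Hst Hm HF4.
split => // x y xF yF x1 y1 xy v [xS yS].
apply: (P1 v).
have E : [set 1; x; y] = 'C_G[v | 'P].
  apply/eqP; rewrite eqEcard Hst.
  rewrite !subUset !sub1set group1 xS yS /=.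
  rewrite -setUA !cardsU1 cards1 !inE.
  by rewrite ![1 == _]eq_sym (negbTE x1) (negbTE y1) xy.
rewrite -E !subUset !sub1set xF yF andbT.
by rewrite andbT; exact: Hb.
Qed.
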